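(* Let $m,n$ be positive integers and let $A=(A(i_1,\dots,i_{2m}))_{1\le i_1,\dots,i_{2m}\le n}$ be any array. Define the array $B=(B(i_1,\dots,i_{2m}))_{1\le i_1,\dots,i_{2m}\le 2n}$ as follows: if for every $1\le s\le m$ exactly one of $i_{2s-1},i_{2s}$ is odd, write the odd one as $2p_s-1$ and the even one as $2q_s$ ($1\le p_s,q_s\le n$) and set $B(i_1,\dots,i_{2m})=(-1)^{k}A(p_1,q_1,\dots,p_m,q_m)$, where $k$ is the number of $s$ with $i_{2s-1}$ even; otherwise set $B(i_1,\dots,i_{2m})=0$. Then $B$ satisfies the alternation condition below and $\mathrm{Pf}^{[2m]}(B)=\mathrm{Det}^{[2m]}(A)$.
   Context: Hyperdeterminant: for an array $A$ indexed by $\{1,\dots,n\}^{2m}$, $\mathrm{Det}^{[2m]}(A):=\frac{1}{n!}\sum_{\sigma_1,\dots,\sigma_{2m}\in\mathfrak{S}_n}\mathrm{sgn}(\sigma_1)\cdots\mathrm{sgn}(\sigma_{2m})\prod_{i=1}^nA(\sigma_1(i),\dots,\sigma_{2m}(i)).$ Alternation condition: an array $B$ indexed by $\{1,\dots,2n\}^{2m}$ satisfies it if, for each $1\le s\le m$, interchanging the arguments $i_{2s-1}$ and $i_{2s}$ multiplies $B(i_1,\dots,i_{2m})$ by $-1$. Hyperpfaffian of such $B$: with $\mathfrak{E}_{2n}=\{\sigma\in\mathfrak{S}_{2n}:\sigma(2i-1)<\sigma(2i),\ 1\le i\le n\}$, $$\mathrm{Pf}^{[2m]}(B):=\frac{1}{n!}\sum_{\sigma_1,\dots,\sigma_m\in\mathfrak{E}_{2n}}\mathrm{sgn}(\sigma_1)\cdots\mathrm{sgn}(\sigma_m)\prod_{i=1}^nB(\sigma_1(2i-1),\sigma_1(2i),\dots,\sigma_m(2i-1),\sigma_m(2i)).$$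 *)

(* Defs.v *)
(* Indices are 0-based: 'I_n stands for {1,...,n}. *)
From HB Require Import structures.
From mathcomp Require Import all_boot all_order all_algebra all_fingroup.
From mathcomp Require Import zify.
Set Implicit Arguments. Unset Strict Implicit. Unset Printing Implicit Defensive.
Import GRing.Theory.
Local Open Scope ring_scope.

(* pair position: pos s b = 2s + b in 'I_(2k); corresponds (1-based) to
   2(s+1)-1 if b = false and 2(s+1) if b = true *)
Lemma pos_lt (k : nat) (s : 'I_k) (b : bool) : (2 * s + b < 2 * k)%N.
Proof. have := ltn_ord s; case: b => /=; lia. Qed.
Definition pos (k : nat) (s : 'I_k) (b : bool) : 'I_(2 * k) := Ordinal (pos_lt s b).

Lemma half_lt (k : nat) (t : 'I_(2 * k)) : (t %/ 2 < k)%N.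
Proof. have := ltn_ord t; rewrite ltn_divLR //; lia. Qed.
Definition half (k : nat) (t : 'I_(2 * k)) : 'I_k := Ordinal (half_lt t).

Definition sgnp (R : pzRingType) (k : nat) (s : 'S_k) : R := (-1) ^+ odd_perm s.

Definition array (R : Type) (m N : nat) := {ffun 'I_(2 * m) -> 'I_N} -> R.

Definition hDet (R : fieldType) (m n : nat) (A : array R m n) : R :=
  (n`!%:R)^-1 *
  \sum_(sig : {ffun 'I_(2 * m) -> 'S_n})
     (\prod_(t : 'I_(2 * m)) sgnp R (sig t)) *
     \prod_(i : 'I_n) A [ffun t => sig t i].

Definition inE2 (n : nat) (s : 'S_(2 * n)) : bool :=
  [forall i : 'I_n, (s (pos i false) < s (pos i true))%N].

Definition hPf (R : fieldType) (m n : nat) (B : array R m (2 * n)) : R :=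
  (n`!%:R)^-1 *
  \sum_(sig : {ffun 'I_m -> 'S_(2 * n)} | [forall s, inE2 (sig s)])
     (\prod_(s : 'I_m) sgnp R (sig s)) *
     \prod_(i : 'I_n) B [ffun t => sig (half t) (pos i (odd t))].

Definition alternating (R : pzRingType) (m N : nat) (B : array R m N) : Prop :=
  forall (s : 'I_m) (i : {ffun 'I_(2 * m) -> 'I_N}),
    B [ffun t => i (tperm (pos s false) (pos s true) t)] = - B i.

Definition BofA (R : pzRingType) (m n : nat) (A : array R m n) : array R m (2 * n) :=
  fun i =>
    if [forall s : 'I_m, odd (i (pos s false)) != odd (i (pos s true))] then
      (-1) ^+ #|[set s : 'I_m | odd (i (pos s false))]| *
      A [ffun t => let a := i (pos (half t) false) in
                   let b := i (pos (half t) true) in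
                   if odd a == odd t then half a else half b]
    else 0.

(* Main.v *)
Require Import Defs.
From HB Require Import structures.
From mathcomp Require Import all_boot all_order all_algebra all_fingroup zify.
Import Defs.
Import GRing.Theory.
Local Open Scope ring_scope.
Set Implicit Arguments. Unset Strict Implicit. Unset Printing Implicit Defensive.

Lemma half_pos k (s : 'I_k) b : half (pos s b) = s.
Proof. apply: val_inj => /=; case: b => /=; lia. Qed.
Lemma odd_pos k (s : 'I_k) b : odd (pos s b) = b.
Proof. rewrite /= oddD oddM /=; by case: b. Qed.
Lemma posK k (t : 'I_(2 * k)) : pos (half t) (odd t) = t.
Proof. apply: ord_inj => /=; rewrite divn2 -[X in _ = X](odd_double_half t) -muln2; lia. Qed.
Lemma pos_inj k (s s' : 'I_k) b b' : (pos s b == pos s' b') = (s == s') && (b == b').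
Proof.
apply/idP/idP; last by case/andP=> /eqP-> /eqP->.
move/eqP=> E; have h1 := congr1 (@half k) E.
have h2 := congr1 (fun t : 'I_(2 * k) => odd t) E.
rewrite !half_pos in h1; rewrite /= !odd_pos in h2; by rewrite h1 h2 !eqxx.
Qed.
Lemma tperm_pos k (s s' : 'I_k) b :
  tperm (pos s false) (pos s true) (pos s' b) = if s' == s then pos s (~~ b) else pos s' b.
Proof.
case: (eqVneq s' s) => [->|ne]; first by case: b; rewrite ?tpermL ?tpermR.
by rewrite tpermD // pos_inj eq_sym (negbTE ne).
Qed.

Lemma alt_BofA (R : pzRingType) m n (A : array R m n) : alternating (BofA A).
Proof.
move=> s i; set i' := [ffun t => i (tperm _ _ t)].
have Ei' s' b : i' (pos s' b) = if s' == s then i (pos s (~~ b)) else i (pos s' b).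
  by rewrite ffunE tperm_pos; case: eqP.
rewrite /BofA.
have -> : [forall s', odd (i' (pos s' false)) != odd (i' (pos s' true))] =
          [forall s', odd (i (pos s' false)) != odd (i (pos s' true))].
  apply: eq_forallb => s'; rewrite !Ei'; case: (eqVneq s' s) => [->|_] //=; by rewrite eq_sym.
case: forallP => [H|_]; last by rewrite oppr0.
have Hs := H s.
rewrite (cardsD1 s [set _ | _]) [in RHS](cardsD1 s [set _ | _]).
have -> : [set s0 | odd (i' (pos s0 false))] :\ s = [set s0 | odd (i (pos s0 false))] :\ s.
  by apply/setP => x; rewrite !inE Ei'; case: eqP.
rewrite !inE Ei' eqxx /=.
have -> : A [ffun t => let a := i' (pos (half t) false) in
                   let b := i' (pos (half t) true) in
                   if odd a == odd t then half a else half b] =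
          A [ffun t => let a := i (pos (half t) false) in
                   let b := i (pos (half t) true) in
                   if odd a == odd t then half a else half b].
  congr (A _); apply/ffunP => t; rewrite !ffunE /= !tperm_pos.
  case: (eqVneq (half t) s) => [->|_] //=.
  move: Hs; case: (odd (i (pos s false))); case: (odd (i (pos s true))); by case: (odd t).
rewrite !exprD -!mulrA -mulNr; congr (_ * _).
move: Hs; case: (odd (i (pos s false))); case: (odd (i (pos s true))) => //= _; by rewrite expr0 expr1 ?opprK.
Qed.

Lemma val_half k (u : 'I_(2 * k)) : (nat_of_ord u = 2 * nat_of_ord (half u) + odd u)%N.
Proof. by rewrite -[in LHS](posK u). Qed.

Lemma tperm_inj (T T' : finType) (f : T -> T') (finj : injective f) x y z :
  tperm (f x) (f y) (f z) = f (tperm x y z).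
Proof.
case: (tpermP x y z) => [->|->|/eqP zx /eqP zy]; rewrite ?tpermL ?tpermR //.
by rewrite tpermD // (inj_eq finj) eq_sym.
Qed.

Section Perms.
Variable n : nat.

Definition ef (b : bool) (a : 'S_n) (t : 'I_(2 * n)) : 'I_(2 * n) :=
  if odd t == b then pos (a (half t)) (odd t) else t.

Lemma efK b a : cancel (ef b a) (ef b a^-1).
Proof.
move=> t; rewrite /ef; case: (eqVneq (odd t) b) => [E|NE].
  by rewrite odd_pos half_pos E eqxx permK -E posK.
by rewrite (negbTE NE).
Qed.

Definition ep b a : 'S_(2 * n) := perm (can_inj (efK b a)).

Lemma epE b a t : ep b a t = ef b a t.
Proof. by rewrite permE. Qed.

Lemma epM b : {morph ep b : x y / (x * y)%g}.
Proof.
move=> x y; apply/permP => t; rewrite permM !epE /ef.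
case: (eqVneq (odd t) b) => [E|NE]; last by rewrite (negbTE NE).
by rewrite odd_pos half_pos E eqxx permM.
Qed.

Lemma ep1 b : ep b 1%g = 1%g.
Proof. by apply/permP => t; rewrite epE perm1 /ef perm1 posK; case: eqP. Qed.

Lemma ep_tperm b x y : ep b (tperm x y) = tperm (pos x b) (pos y b).
Proof.
apply/permP => t; rewrite epE /ef; case: (eqVneq (odd t) b) => [E|NE].
  rewrite -[X in _ = (tperm _ _) X](posK t) E.
  have inj : injective (fun u : 'I_n => pos u b).
    by move=> u v /eqP; rewrite pos_inj eqxx andbT => /eqP.
  by have /= -> := tperm_inj inj x y (half t).
have nb : (b == odd t) = false by rewrite eq_sym (negbTE NE).
by rewrite tpermD // -[t]posK pos_inj nb andbF.
Qed.

Lemma odd_ep b a : odd_perm (ep b a) = odd_perm a.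
Proof.
case: (prod_tpermP a) => ts -> dp.
rewrite (big_morph (ep b) (epM b) (ep1 b)).
under eq_bigr do rewrite ep_tperm.
rewrite -(big_map (fun t => (pos t.1 b, pos t.2 b)) xpredT (fun u => tperm u.1 u.2)).
rewrite !odd_perm_prod ?size_map //.
rewrite all_map; apply: sub_all dp => u /=; by rewrite /dpair pos_inj eqxx andbT.
Qed.

Definition swf (S : {set 'I_n}) (t : 'I_(2 * n)) : 'I_(2 * n) :=
  if half t \in S then pos (half t) (~~ odd t) else t.

Lemma swK S : involutive (swf S).
Proof.
move=> t; rewrite /swf; have [H|H] := boolP (half t \in S); last by rewrite (negbTE H) ?(negbTE H).
by rewrite half_pos H odd_pos negbK posK.
Qed.

Definition sw S : 'S_(2 * n) := perm (inv_inj (swK S)).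

Lemma swE S h c : sw S (pos h c) = if h \in S then pos h (~~ c) else pos h c.
Proof. by rewrite permE /swf half_pos odd_pos. Qed.

Lemma odd_sw S : odd_perm (sw S) = odd #|S|.
Proof.
move: {2}#|S| (erefl #|S|) => k; elim: k S => [|k IH] S HS.
  have -> : S = set0 by apply/eqP; rewrite -cards_eq0 HS.
  have -> : sw set0 = 1%g.
    by apply/permP => t; rewrite -(posK t) swE inE perm1.
  by rewrite cards0 odd_perm1.
have [i Si] : exists i, i \in S.
  by apply/set0Pn; rewrite -card_gt0 HS.
have HS' : #|S :\ i| = k by move: HS; rewrite (cardsD1 i) Si add1n => -[].
have -> : sw S = (tperm (pos i false) (pos i true) * sw (S :\ i))%g.
  apply/permP => t; rewrite permM -(posK t).
  move: (half t) (odd t) => h c.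
  rewrite tperm_pos !swE; case: (eqVneq h i) => [->|ne].
    by rewrite Si swE !inE eqxx.
  by rewrite swE !inE ne.
by rewrite odd_mul_tperm pos_inj eqxx /= (IH _ HS') HS' HS.
Qed.

Definition mk (a b : 'S_n) : 'S_(2 * n) :=
  (sw [set i | (b i < a i)%N] * (ep false a * ep true b))%g.

Lemma mkE a b i c :
  mk a b (pos i c) = if (b i < a i)%N (+) c then pos (b i) true else pos (a i) false.
Proof.
rewrite /mk !permM swE inE.
set d := (b i < a i)%N.
have -> : (if d then pos i (~~ c) else pos i c) = pos i (d (+) c).
  by case: d.
rewrite !epE /ef !odd_pos !half_pos.
by case: addb; rewrite ?odd_pos ?half_pos.
Qed.

Lemma odd_mk a b :
  odd_perm (mk a b) = odd #|[set i | (b i < a i)%N]| (+) odd_perm a (+) odd_perm b.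
Proof. by rewrite /mk !odd_permM odd_sw odd_ep odd_ep addbA. Qed.

End Perms.

Section Rec.
Variable n : nat.
Implicit Types a b : 'S_n.

Lemma mk_lt a b i : (mk a b (pos i false) < mk a b (pos i true))%N.
Proof. rewrite !mkE; case: (ltnP (b i) (a i)) => h /=; lia. Qed.

Lemma odd_mk_pos a b i c : odd (mk a b (pos i c)) = (b i < a i)%N (+) c.
Proof. by rewrite mkE; case: addb; rewrite odd_pos. Qed.

Lemma half_mk_pos a b i c :
  half (mk a b (pos i c)) = if (b i < a i)%N (+) c then b i else a i.
Proof. by rewrite mkE; case: addb; rewrite half_pos. Qed.

Definition rec (s : 'S_(2 * n)) (c : bool) (i : 'I_n) : 'I_n :=
  half (if odd (s (pos i false)) == c then s (pos i false) else s (pos i true)).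

Lemma recmk a b c i : rec (mk a b) c i = if c then b i else a i.
Proof.
by rewrite /rec !odd_mk_pos; case d: (b i < a i)%N; case: c; rewrite /= half_mk_pos /= d.
Qed.

Definition pickperm (f : 'I_n -> 'I_n) : 'S_n :=
  odflt 1%g [pick a : 'S_n | [forall i, a i == f i]].

Lemma pickpermE f : injective f -> forall i, pickperm f i = f i.
Proof.
move=> finj i; rewrite /pickperm; case: pickP => [a /forallP H | H] /=.
  exact/eqP.
have := H (perm finj); rewrite (_ : [forall i, _] = true) //.
by apply/forallP => j; rewrite permE.
Qed.

Lemma rec_inj (s : 'S_(2 * n)) c :
  (forall i, odd (s (pos i false)) != odd (s (pos i true))) -> injective (rec s c).
Proof.
move=> V.
have spec i : exists e, pos (rec s c i) c = s (pos i e).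
  rewrite /rec; case: (eqVneq (odd (s (pos i false))) c) => [E|NE].
    by exists false; rewrite -E posK.
  exists true; rewrite -[RHS]posK; congr pos.
  by move: (V i) NE; case: (odd _); case: (odd _); case: c.
move=> i j E; have [e1 H1] := spec i; have [e2 H2] := spec j.
move: H1; rewrite E H2 => /perm_inj /eqP; rewrite pos_inj => /andP[/eqP -> _].
by [].
Qed.

Lemma mk_surj (s : 'S_(2 * n)) :
  (forall i, (s (pos i false) < s (pos i true))%N) ->
  (forall i, odd (s (pos i false)) != odd (s (pos i true))) ->
  mk (pickperm (rec s false)) (pickperm (rec s true)) = s.
Proof.
move=> L V; apply/permP => u; rewrite -[u]posK; move: (half u) (odd u) => i c.
rewrite mkE !pickpermE; try exact: rec_inj.
move: (V i) (L i); rewrite /rec.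
set u0 := s (pos i false); set u1 := s (pos i true).
have e0 := posK u0; have e1 := posK u1; have v0 := val_half u0; have v1 := val_half u1.
have hh0 : (nat_of_ord (half u0) = u0 %/ 2)%N by [].
have hh1 : (nat_of_ord (half u1) = u1 %/ 2)%N by [].
case: (odd u0) e0 v0 => e0 v0; case: (odd u1) e1 v1 => e1 v1 //= _ lt.
  rewrite /= addn1 addn0 in v0 v1.
  have -> : (u0 %/ 2 < u1 %/ 2)%N by lia.
  by case: c => /=; rewrite ?e0 ?e1.
rewrite /= addn1 addn0 in v0 v1.
have -> : (u1 %/ 2 < u0 %/ 2)%N = false by lia.
by case: c => /=; rewrite ?e0 ?e1.
Qed.

End Rec.

Lemma sign_card (R : pzRingType) (I : finType) (P : pred I) :
  (-1) ^+ #|[set i | P i]| = \prod_i (if P i then -1 else 1) :> R.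
Proof. by rewrite -big_mkcond /= prodr_const cardsE. Qed.

Lemma prod_pairs (R : comPzRingType) m (h : 'I_(2 * m) -> R) :
  \prod_(t : 'I_(2 * m)) h t = \prod_(s : 'I_m) (h (pos s false) * h (pos s true)).
Proof.
rewrite (reindex (fun p : 'I_m * bool => pos p.1 p.2)) /=; last first.
  exists (fun t => (half t, odd t)) => [[s b] _ | t _] /=.
    by rewrite half_pos odd_pos.
  exact: posK.
rewrite -(pair_bigA _ (fun s b => h (pos s b))) /=; apply: eq_bigr => s _; by rewrite big_bool /= mulrC.
Qed.

Definition Fm m n (y : {ffun 'I_(2 * m) -> 'S_n}) : {ffun 'I_m -> 'S_(2 * n)} :=
  [ffun s => mk (y (pos s false)) (y (pos s true))].

Lemma sgnp_mk (R : comPzRingType) n (a b : 'S_n) :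
  sgnp R (mk a b) * (-1) ^+ #|[set i | (b i < a i)%N]| = sgnp R a * sgnp R b.
Proof.
rewrite /sgnp odd_mk.
move: (odd_perm a) (odd_perm b) #|_| => x y k.
rewrite !signr_addb signr_odd mulrC !mulrA -exprD.
by rewrite -[(-1) ^+ (k + k)]signr_odd oddD addbb expr0 mul1r.
Qed.

Lemma main_sum (R : comPzRingType) m n (A : array R m n) :
  \sum_(sig : {ffun 'I_m -> 'S_(2 * n)} | [forall s, inE2 (sig s)])
     (\prod_(s : 'I_m) sgnp R (sig s)) *
     \prod_(i : 'I_n) BofA A [ffun t => sig (half t) (pos i (odd t))]
  = \sum_(sig : {ffun 'I_(2 * m) -> 'S_n})
     (\prod_(t : 'I_(2 * m)) sgnp R (sig t)) *
     \prod_(i : 'I_n) A [ffun t => sig t i].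
Proof.
pose valid (x : {ffun 'I_m -> 'S_(2 * n)}) :=
  [forall i : 'I_n, forall s : 'I_m, odd (x s (pos i false)) != odd (x s (pos i true))].
rewrite (bigID valid) /= [X in _ + X]big1 ?addr0; last first.
  move=> x /andP[_ /forallPn [i /forallPn [s H]]]; rewrite negbK in H.
  rewrite (bigD1 i) //=.
  have -> : BofA A [ffun t => x (half t) (pos i (odd t))] = 0.
    rewrite /BofA ifN //; apply/forallPn; exists s.
    by rewrite !ffunE !half_pos !odd_pos negbK.
  by rewrite mul0r mulr0.
rewrite (eq_bigl (fun x => x \in (@Fm m n) @: setT)); last first.
  move=> x; apply/andP/imsetP.
    move=> [/forallP P /forallP V].
    exists [ffun t => pickperm (rec (x (half t)) (odd t))]; first by rewrite inE.
    apply/ffunP => s; rewrite !ffunE !half_pos !odd_pos; symmetry; apply: mk_surj.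
      by move=> i; have /forallP := P s; move=> /(_ i).
    by move=> i; have /forallP := V i; move=> /(_ s).
  move=> [y _ ->]; split.
    apply/forallP => s; rewrite ffunE; apply/forallP => i; exact: mk_lt.
  apply/forallP => i; apply/forallP => s; rewrite ffunE !odd_mk_pos.
  by case: (_ < _)%N.
rewrite big_imset /=; last first.
  move=> y y' _ _ E; apply/ffunP => t; rewrite -[t]posK; move: (half t) (odd t) => s c.
  move/ffunP: E => /(_ s); rewrite !ffunE => Es.
  apply/permP => i; have := congr1 (fun sg => rec sg c i) Es; rewrite /= !recmk.
  by case: c.
apply: eq_big => [x|y _]; first by rewrite in_setT.
have Bi i : BofA A [ffun t => Fm y (half t) (pos i (odd t))] =
    (-1) ^+ #|[set s | (y (pos s true) i < y (pos s false) i)%N]| * A [ffun t => y t i].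
  rewrite /BofA ifT; last first.
    apply/forallP => s; rewrite !ffunE !half_pos !odd_pos !odd_mk_pos.
    by case: (_ < _)%N.
  congr (_ * A _).
    congr (_ ^+ _); apply: eq_card => s /=.
    by rewrite !in_set ffunE half_pos odd_pos /Fm ffunE odd_mk_pos addbF.
  apply/ffunP => t; rewrite !ffunE !half_pos !odd_pos /Fm ?ffunE !odd_mk_pos !half_mk_pos.
  have yt : y t = y (pos (half t) (odd t)) by rewrite posK.
  rewrite yt; case: (odd t); by case: (_ < _)%N.
rewrite (eq_bigr _ (fun i _ => Bi i)).
rewrite big_split /= mulrA; congr (_ * _).
rewrite (prod_pairs (fun t => sgnp R (y t))).
under [X in _ * X = _]eq_bigr do rewrite sign_card.
rewrite exchange_big /=.
under [X in _ * X = _]eq_bigr do rewrite -sign_card.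
rewrite -big_split; apply: eq_bigr => s _.
by rewrite ffunE; apply: sgnp_mk.
Qed.

Theorem proposition2p2 (R : fieldType) (hR : [pchar R] =i pred0)
  (m n : nat) (hm : (0 < m)%N) (hn : (0 < n)%N) (A : array R m n) :
  alternating (BofA A) /\ hPf (BofA A) = hDet A.
Proof.
split; first exact: alt_BofA.
by rewrite /hPf /hDet main_sum.
Qed.
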